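(* Let $V=\{1,\ldots,p\}$ and let $\mathbf{X}_V$ be a random vector with positive definite covariance matrix $\Sigma=\{\sigma_{uv}\}_{u,v\in V}$ and concentration matrix $K=\Sigma^{-1}=\{\kappa_{uv}\}_{u,v\in V}$. Suppose $K$ implies the undirected graph $\mathcal{G}=(V,\mathcal{E})$. Then for every edge $\{x,y\}\in\mathcal{E}$, $$\omega(\langle x,y\rangle,\Sigma)=\frac{\sigma_{xy\cdot V\setminus\{x,y\}}}{1-\rho^{2}_{\{x,y\}\mid V\setminus\{x,y\}}},$$ where $\sigma_{xy\cdot V\setminus\{x,y\}}$ is the $(x,y)$ entry of the partial covariance matrix $\Sigma_{\{x,y\}\{x,y\}\cdot V\setminus\{x,y\}}$ and $\rho_{\{x,y\}\mid V\setminus\{x,y\}}$ is the vector correlation coefficient between $\mathbf{X}_{\{x,y\}}$ and $\mathbf{X}_{V\setminus\{x,y\}}$.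
   Context: For $A,B\subseteq V$ disjoint, $\Sigma_{AB}$ denotes the submatrix of $\Sigma$ with rows $A$, columns $B$; $\Sigma_{AA}^{-1}$ means $(\Sigma_{AA})^{-1}$; the partial covariance matrix is $\Sigma_{AA\cdot B}=\Sigma_{AA}-\Sigma_{AB}\Sigma_{BB}^{-1}\Sigma_{BA}$ (equal to $\Sigma_{AA}$ if $B=\emptyset$). $K$ implies an undirected graph $\mathcal{G}=(V,\mathcal{E})$ (no self-loops) if every nonzero off-diagonal entry $\kappa_{uv}$ corresponds to an edge $\{u,v\}\in\mathcal{E}$. A path between $x$ and $y$ is a sequence $\pi=\langle x=v_1,\ldots,v_k=y\rangle$ of $k\ge2$ distinct vertices with consecutive vertices adjacent; $V(\pi)$ and $\mathcal{E}(\pi)$ denote its vertex and edge sets. For a positive definite matrix $\Gamma$ indexed by $V$ and a path $\pi$ with $P=V(\pi)$, the path weight is $\omega(\pi,\Gamma)=(-1)^{|P|+1}\,|\Gamma_{PP}|\prod_{\{u,v\}\in\mathcal{E}(\pi)}\{\Gamma^{-1}\}_{uv}$, where $|\cdot|$ of a matrix is the determinant. For disjoint $A,B$, the vector alienation coefficient is $\lambda_{A\mid B}=|\Sigma_{A\cup B\,A\cup B}|/(|\Sigma_{AA}|\,|\Sigma_{BB}|)$ and the vector correlation coefficient is $\rho_{A\mid B}=\sqrt{1-\lambda_{A\mid B}}$, with the convention $\rho_{A\mid B}=0$ if $A=\emptyset$ or $B=\emptyset$. *)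

(* Defs.v *)
From HB Require Import structures.
From mathcomp Require Import all_boot all_order all_algebra.
Set Implicit Arguments. Unset Strict Implicit. Unset Printing Implicit Defensive.
Import Order.TTheory GRing.Theory Num.Theory.
Local Open Scope ring_scope.

Section Defs.
Variables (R : rcfType) (p : nat).

Definition posdef (M : 'M[R]_p) : Prop :=
  M^T = M /\ forall v : 'cV[R]_p, v != 0 -> 0 < (v^T *m M *m v) 0 0.

(* Submatrix M_{AB}, rows indexed by A, columns by B (in increasing order). *)
Definition subm (A B : {set 'I_p}) (M : 'M[R]_p) : 'M[R]_(#|A|, #|B|) :=
  \matrix_(i, j) M (enum_val i) (enum_val j).

(* Entries (u,v) of Sigma_{VV} - Sigma_{VB} Sigma_{BB}^{-1} Sigma_{BV};
   the partial covariance matrix Sigma_{AA.B} is its restriction to A x A,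
   so sigma_{uv.B} = pcov_entry B M u v for u, v in A.
   (Equals M u v when B is empty.) *)
Definition pcov_entry (B : {set 'I_p}) (M : 'M[R]_p) (u v : 'I_p) : R :=
  M u v - \sum_(i < #|B|) \sum_(j < #|B|)
            M u (enum_val i) * invmx (subm B B M) i j * M (enum_val j) v.

Definition pcov (A B : {set 'I_p}) (M : 'M[R]_p) : 'M[R]_#|A| :=
  \matrix_(i, j) pcov_entry B M (enum_val i) (enum_val j).

Definition valien (A B : {set 'I_p}) (M : 'M[R]_p) : R :=
  \det (subm (A :|: B) (A :|: B) M) / (\det (subm A A M) * \det (subm B B M)).

Definition vcorr (A B : {set 'I_p}) (M : 'M[R]_p) : R :=
  if (A == set0) || (B == set0) then 0 else Num.sqrt (1 - valien A B M).

Definition implies_graph (K : 'M[R]_p) (E : rel 'I_p) : Prop :=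
  forall u v, u != v -> K u v != 0 -> E u v.

Definition is_path (E : rel 'I_p) (s : seq 'I_p) : Prop :=
  (2 <= size s)%N /\ uniq s /\
  (forall i, (i.+1 < size s)%N -> forall x0, E (nth x0 s i) (nth x0 s i.+1)).

Definition path_weight (s : seq 'I_p) (G : 'M[R]_p) : R :=
  let P := [set v in s] in
  (-1) ^+ (#|P|.+1) * \det (subm P P G) *
  \prod_(e <- zip s (behead s)) (invmx G) e.1 e.2.

End Defs.

(* Main.v *)
Require Import Defs.
From HB Require Import structures.
From mathcomp Require Import all_boot all_order all_algebra all_fingroup.
From mathcomp Require Import ring lra.
Set Implicit Arguments. Unset Strict Implicit. Unset Printing Implicit Defensive.
Import Order.TTheory GRing.Theory Num.Theory.
Local Open Scope ring_scope.

Section Aux.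
Variable R : rcfType.

Lemma det_reindex (T : finType) (F : T -> T -> R) n k (h1 : 'I_n -> T) (h2 : 'I_k -> T) :
  n = k -> injective h1 -> injective h2 ->
  (forall t, (t \in codom h1) = (t \in codom h2)) ->
  \det (\matrix_(i,j) F (h1 i) (h1 j)) = \det (\matrix_(i,j) F (h2 i) (h2 j)).
Proof.
move=> nk; subst k => i1 i2 hc.
pose s i := odflt i [pick j | h1 j == h2 i].
have hs i : h1 (s i) = h2 i.
  rewrite /s; case: pickP => [j /eqP //|/= H].
  have : h2 i \in codom h2 by apply: codom_f.
  rewrite -hc => /codomP [j ej]; by move: (H j); rewrite ej eqxx.
have sinj : injective s by move=> a b e; apply: i2; rewrite -!hs e.
pose sp := perm sinj.
have -> : \matrix_(i,j) F (h2 i) (h2 j) = row_perm sp (col_perm sp (\matrix_(i,j) F (h1 i) (h1 j))).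
  by apply/matrixP => i j; rewrite !mxE !permE /= !hs.
rewrite row_permE col_permE !det_mulmx !det_perm odd_permV mulrA mulrC mulrA -expr2 -signr_odd.
by case: (odd_perm sp); rewrite /= ?expr1n ?mul1r // sqrrN expr1n mul1r.
Qed.

Lemma det_schur n1 n2 (a : 'M[R]_n1) (b : 'M[R]_(n1,n2)) c (d : 'M[R]_n2) :
  d \in unitmx -> \det (block_mx a b c d) = \det d * \det (a - b *m invmx d *m c).
Proof.
move=> ud.
have -> : block_mx a b c d = block_mx 1%:M (b *m invmx d) 0 1%:M *m block_mx (a - b *m invmx d *m c) 0 c d.
  rewrite mulmx_block !mul1mx !mul0mx ?mulmx0 ?add0r ?addr0 -!mulmxA mulVmx // mulmx1.
  by rewrite mulmxA subrK.
by rewrite det_mulmx det_ublock det_lblock !det1 !mul1r mulrC.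
Qed.

Lemma det22 (M : 'M[R]_2) : \det M = M 0 0 * M 1 1 - M 0 1 * M 1 0.
Proof.
rewrite (expand_det_row _ 0) !big_ord_recl big_ord0 addr0 /cofactor !det_mx11 /=.
rewrite !mxE /=.
have e1 : lift (0 : 'I_2) (0 : 'I_1) = 1 by apply: val_inj.
have e2 : lift (ord0 : 'I_2) (ord0 : 'I_1) = 1 by apply: val_inj.
have e3 : lift (lift (ord0 : 'I_2) (ord0 : 'I_1)) (0 : 'I_1) = 0 by apply: val_inj.
have e4 : (ord0 : 'I_2) = 0 by apply: val_inj.
rewrite ?e1 ?e2 ?e3 ?e4 /bump /= expr0 expr1 !mul1r mulN1r.
have e5 : lift (1 : 'I_2) (0 : 'I_1) = 0 by apply: val_inj.
by rewrite e5 mulrN.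
Qed.
Definition qf n (M : 'M[R]_n) (w : 'cV[R]_n) := (w^T *m M *m w) 0 0.

Lemma pd_unit n (M : 'M[R]_n) : (forall w, w != 0 -> 0 < qf M w) -> M \in unitmx.
Proof.
move=> H; rewrite unitmxE unitfE; apply/negP => /det0P [v nv vM].
have nv' : v^T != 0 by apply: contra nv => /eqP e; rewrite -[v]trmxK e trmx0.
by have := H _ nv'; rewrite /qf trmxK vM mul0mx mxE ltxx.
Qed.

Lemma pd_sub p (S : 'M[R]_p) n (h : 'I_n -> 'I_p) : injective h -> posdef S ->
  forall w : 'cV[R]_n, w != 0 -> 0 < qf (\matrix_(i,j) S (h i) (h j)) w.
Proof.
move=> hi [_ HS] w nw.
pose P : 'M[R]_(p, n) := \matrix_(a, i) (h i == a)%:R.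
have PE : forall a i, P a i = (h i == a)%:R by move=> a i; rewrite /P mxE.
have EPS : forall i b, (P^T *m S) i b = S (h i) b.
  move=> i b; rewrite mxE (bigD1 (h i)) //= big1 => [|a na].
    by rewrite !mxE eqxx mul1r addr0.
  by rewrite !mxE eq_sym (negbTE na) mul0r.
have EP : \matrix_(i,j) S (h i) (h j) = P^T *m S *m P.
  apply/matrixP => i j; rewrite [RHS]mxE (bigD1 (h j)) //= big1 => [|b nb].
    by rewrite EPS /P !mxE eqxx mulr1 addr0.
  by rewrite /P !mxE eq_sym (negbTE nb) mulr0.
have : 0 < qf S (P *m w).
  apply: HS; apply: contra nw => /eqP e; apply/eqP/matrixP => i j.
  have := congr1 (fun M : 'M[R]_(p,1) => M (h i) j) e; rewrite !mxE (bigD1 i) //= big1 => [|k nk].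
    by rewrite PE eqxx mul1r addr0.
  by rewrite PE (inj_eq hi) (negbTE nk) mul0r.
by rewrite /qf EP trmx_mul !mulmxA.
Qed.

Lemma qf2 (M : 'M[R]_2) a b :
  qf M (\col_i (if i == 0 then a else b)) = a^+2 * M 0 0 + a * b * (M 0 1 + M 1 0) + b^+2 * M 1 1.
Proof.
rewrite /qf !mxE !big_ord_recl !big_ord0 /=.
rewrite !mxE !big_ord_recl !big_ord0 /= !mxE /=.
have e1 : lift ord0 (ord0 : 'I_1) = 1 :> 'I_2 by apply: val_inj.
have e0 : (ord0 : 'I_2) = 0 by apply: val_inj.
rewrite ?e1 ?e0 /=; ring.
Qed.

Lemma col2_neq0 a b : (a != 0) || (b != 0) -> (\col_(i < 2) (if i == 0 then a else b)) != 0 :> 'cV[R]_2.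
Proof.
case/orP => H; apply: contra H => /eqP e.
  by have := congr1 (fun M : 'cV[R]_2 => M 0 0) e; rewrite !mxE /= => ->.
by have := congr1 (fun M : 'cV[R]_2 => M 1 0) e; rewrite !mxE /= => ->.
Qed.

Lemma scal (s00 s01 s11 c00 c01 c11 : R) :
 (forall a b : R, (a != 0) || (b != 0) -> 0 < a^+2 * s00 + 2 * a * b * s01 + b^+2 * s11) ->
 (forall a b : R, 0 <= a^+2 * c00 + 2 * a * b * c01 + b^+2 * c11) ->
 0 < s00 * s11 - s01^+2 /\ s00 * s11 - s01^+2 <= (s00+c00)*(s11+c11) - (s01+c01)^+2.
Proof.
move=> HS HC.
have s00p : 0 < s00 by have := HS 1 0; rewrite oner_eq0 /=; move/(_ isT); lra.
have s11p : 0 < s11 by have := HS 0 1; rewrite oner_eq0 orbT; move/(_ isT); lra.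
have dS : 0 < s00 * s11 - s01^+2.
  have := HS s01 (- s00); rewrite oppr_eq0 (lt0r_neq0 s00p) orbT => /(_ isT) H.
  have H' : 0 < s00 * (s00 * s11 - s01^+2) by move: H; rewrite !expr2; nra.
  by move: H'; rewrite pmulr_rgt0.
have c00p : 0 <= c00 by have := HC 1 0; lra.
have c11p : 0 <= c11 by have := HC 0 1; lra.
have dC : c01^+2 <= c00 * c11.
  case: (ltrgtP c00 0) => [|c0|c0]; first lra.
    have := HC c01 (- c00) => H.
    have H' : 0 <= c00 * (c00 * c11 - c01^+2) by move: H; rewrite !expr2; nra.
    move: H'; rewrite pmulr_rge0 // ; lra.
  have := HC (- (c11 + 1)) (2 * c01); rewrite c0 !expr2; nra.
split => //.
have X0 : 0 <= s00 * c11 + s11 * c00 by nra.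
have X2 : 4 * (s01 * c01)^+2 <= (s00 * c11 + s11 * c00)^+2.
  have : (s01 * c01)^+2 <= (s00 * s11) * (c00 * c11).
    rewrite exprMn; apply: ler_pM; rewrite ?sqr_ge0 //; lra.
  have := sqr_ge0 (s00 * c11 - s11 * c00).
  rewrite !expr2; nra.
have : 2 * (s01 * c01) <= s00 * c11 + s11 * c00.
  rewrite -[_ <= _]negbK -ltNge; apply/negP => Hl.
  have : (s00 * c11 + s11 * c00)^+2 < (2 * (s01 * c01))^+2.
    rewrite !expr2; nra.
  rewrite exprMn; lra.
rewrite !expr2; nra.
Qed.
End Aux.
Section Main.
Variables (R : rcfType) (p : nat) (Sigma : 'M[R]_p) (x y : 'I_p).
Hypotheses (xy : x != y) (HsT : Sigma^T = Sigma)
  (HSpd : forall v, v != 0 -> 0 < qf Sigma v).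

Local Notation A := [set x; y].
Local Notation B := (~: [set x; y]).

Definition eB (i : 'I_#|B|) : 'I_p := enum_val i.
Definition h2 (a : 'I_2) : 'I_p := if a == 0 then x else y.
Definition g (i : 'I_(2 + #|B|)) : 'I_p :=
  match split i with inl a => h2 a | inr b => eB b end.

Lemma I2 (a : 'I_2) : a = 0 \/ a = 1.
Proof. by case: a => [[|[|n]] H]; [left; apply: val_inj|right; apply: val_inj|]. Qed.

Lemma sum2 (F : 'I_2 -> R) : \sum_(a < 2) F a = F 0 + F 1.
Proof.
rewrite !big_ord_recl big_ord0 addr0.
have e1 : lift ord0 (ord0 : 'I_1) = 1 :> 'I_2 by apply: val_inj.
have e0 : (ord0 : 'I_2) = 0 by apply: val_inj.
by rewrite e0 e1.
Qed.

Lemma h20 : h2 0 = x. Proof. by rewrite /h2 eqxx. Qed.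
Lemma h21 : h2 1 = y. Proof. by rewrite /h2. Qed.

Lemma h2_inj : injective h2.
Proof.
move=> a b; case: (I2 a) => ->; case: (I2 b) => -> //; rewrite ?h20 ?h21 => e;
  by move: xy; rewrite e eqxx.
Qed.

Lemma h2_inA a : h2 a \in A.
Proof. by case: (I2 a) => ->; rewrite ?h20 ?h21 !inE eqxx ?orbT. Qed.

Lemma eB_inj : injective eB.
Proof. exact: enum_val_inj. Qed.

Lemma eB_notA b : eB b \notin A.
Proof. by have := enum_valP b; rewrite inE. Qed.

Lemma eB_h2 a b : (h2 a == eB b) = false.
Proof. by apply/negbTE; apply: contraNneq (eB_notA b) => <-; apply: h2_inA. Qed.

Lemma gL a : g (lshift #|B| a) = h2 a.
Proof. by have := unsplitK (inl a : 'I_2 + 'I_#|B|); rewrite /g /= => ->. Qed.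
Lemma gR b : g (rshift 2 b) = eB b.
Proof. by have := unsplitK (inr b : 'I_2 + 'I_#|B|); rewrite /g /= => ->. Qed.

Lemma g_inj : injective g.
Proof.
move=> i j; rewrite -(splitK i) -(splitK j).
case: (split i) => a; case: (split j) => b /=; rewrite ?gL ?gR.
- by move/h2_inj => ->.
- by move=> e; have := eB_h2 a b; rewrite e eqxx.
- by move=> e; have := eB_h2 b a; rewrite e eqxx.
- by move/eB_inj => ->.
Qed.

Lemma sum_split (f : 'I_p -> R) :
  \sum_(w < p) f w = f x + f y + \sum_(b < #|B|) f (eB b).
Proof.
rewrite (bigID (fun w => w \in A)) /=.
rewrite (bigD1 x) ?inE ?eqxx //= (bigD1 y) ?inE ?eqxx ?orbT 1?eq_sym //=.
rewrite big1 ?addr0 ?addrA; last by move=> i; rewrite !inE; case: (i == x); case: (i == y).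
congr (_ + _); rewrite (eq_bigl (fun w => w \in B)); last by move=> w; rewrite !inE.
by rewrite big_enum_val.
Qed.

Definition Taa : 'M[R]_2 := \matrix_(i, j) Sigma (h2 i) (h2 j).
Definition Tab : 'M[R]_(2, #|B|) := \matrix_(i, j) Sigma (h2 i) (eB j).
Definition Tba : 'M[R]_(#|B|, 2) := \matrix_(i, j) Sigma (eB i) (h2 j).
Definition Tbb : 'M[R]_#|B| := subm B B Sigma.
Definition W := invmx Tbb.
Definition Sc := Taa - Tab *m W *m Tba.
Definition K := invmx Sigma.
Definition Kaa : 'M[R]_2 := \matrix_(i, j) K (h2 i) (h2 j).
Definition Kab : 'M[R]_(2, #|B|) := \matrix_(i, j) K (h2 i) (eB j).

Lemma Sigma_unit : Sigma \in unitmx.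
Proof. exact: pd_unit. Qed.

Lemma Tbb_pd w : w != 0 -> 0 < qf Tbb w.
Proof. exact: (@pd_sub R p Sigma _ eB eB_inj (conj HsT HSpd)). Qed.

Lemma Tbb_unit : Tbb \in unitmx.
Proof. exact: pd_unit Tbb_pd. Qed.

Lemma relK (a : 'I_2) (c : 'I_p) :
  \sum_(w < p) K (h2 a) w * Sigma w c = (h2 a == c)%:R.
Proof.
have := congr1 (fun M : 'M[R]_p => M (h2 a) c) (mulVmx Sigma_unit).
by rewrite !mxE.
Qed.

Lemma R1 : Kaa *m Taa + Kab *m Tba = 1%:M.
Proof.
apply/matrixP => i j; rewrite !mxE sum2 -(inj_eq h2_inj) -relK sum_split.
rewrite /Kaa /Taa /Kab /Tba !mxE h20 h21; congr (_ + _).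
by apply: eq_bigr => b _; rewrite !mxE.
Qed.

Lemma R2 : Kaa *m Tab + Kab *m Tbb = 0.
Proof.
apply/matrixP => i j; rewrite !mxE sum2.
have := relK i (eB j); rewrite eB_h2 sum_split => H; rewrite -[RHS]/(false%:R) -H.
rewrite /Kaa /Tab /Kab /Tbb /subm !mxE h20 h21; congr (_ + _).
by apply: eq_bigr => b _; rewrite !mxE.
Qed.

Lemma KabE : Kab = - (Kaa *m Tab *m W).
Proof.
have e : Kab *m Tbb = - (Kaa *m Tab) by apply/eqP; rewrite -addr_eq0 addrC R2.
by rewrite -(mulmxK Tbb_unit Kab) e /W mulNmx.
Qed.

Lemma KS : Kaa *m Sc = 1%:M.
Proof.
by rewrite /Sc mulmxBr -R1 KabE mulNmx !mulmxA.
Qed.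

Lemma detKS : \det Kaa * \det Sc = 1.
Proof. by rewrite -det_mulmx KS det1. Qed.

Lemma Sc01 : Sc 0 1 = - K x y * \det Sc.
Proof.
have E i j := congr1 (fun M : 'M[R]_2 => M i j) KS.
have e01 := E 0 1; have e11 := E 1 1.
rewrite !mxE !sum2 /= in e01 e11.
have H : Sc 0 1 * \det Kaa = - Kaa 0 1.
  rewrite det22; apply/eqP; rewrite -subr_eq0.
  have -> : Sc 0 1 * (Kaa 0 0 * Kaa 1 1 - Kaa 0 1 * Kaa 1 0) - - Kaa 0 1 =
    Kaa 1 1 * (Kaa 0 0 * Sc 0 1 + Kaa 0 1 * Sc 1 1) -
    Kaa 0 1 * (Kaa 1 0 * Sc 0 1 + Kaa 1 1 * Sc 1 1 - 1) by ring.
  by rewrite e01 e11 /= subrr !mulr0 subrr.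
have -> : K x y = Kaa 0 1 by rewrite /Kaa mxE h20 h21.
by rewrite -H -mulrA detKS mulr1.
Qed.

Lemma pcovE : pcov_entry B Sigma x y = Sc 0 1.
Proof.
rewrite /pcov_entry /Sc !mxE h20 h21; congr (_ - _).
rewrite exchange_big; apply: eq_bigr => k _; rewrite !mxE mulr_suml.
by apply: eq_bigr => l _; rewrite /Tab /Tba /W /Tbb !mxE h20 h21.
Qed.

Lemma EMg : \matrix_(i, j) Sigma (g i) (g j) = block_mx Taa Tab Tba Tbb.
Proof.
apply/matrixP => i j; rewrite -(splitK i) -(splitK j).
case: (split i) => a; case: (split j) => b /=;
  rewrite mxE ?gL ?gR ?block_mxEul ?block_mxEur ?block_mxEdl ?block_mxEdr !mxE //.
Qed.

Lemma codom_enum_val (S : {set 'I_p}) t :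
  (t \in codom (fun i : 'I_#|S| => (enum_val i : 'I_p))) = (t \in S).
Proof.
apply/codomP/idP => [[i ->]|H]; first exact: enum_valP.
by exists (enum_rank_in H t); rewrite enum_rankK_in.
Qed.

Lemma detAll : \det (subm (A :|: B) (A :|: B) Sigma) = \det Tbb * \det Sc.
Proof.
rewrite /subm (@det_reindex R _ (fun a b => Sigma a b) _ _ _ g).
- by rewrite EMg det_schur // Tbb_unit.
- have e1 : #|A :|: B| = #|'I_p| by rewrite setUCr cardsT.
  by rewrite e1 -(cardsC A) cards2 xy.
- exact: enum_val_inj.
- exact: g_inj.
- move=> t; rewrite codom_enum_val setUCr inE; apply/esym/codomP.
  case: (boolP (t \in A)) => H.
    move: H; rewrite !inE => /orP [] /eqP ->.
      by exists (lshift _ 0); rewrite gL h20.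
    by exists (lshift _ 1); rewrite gL h21.
  have HB : t \in B by rewrite inE.
  by exists (rshift 2 (enum_rank_in HB t)); rewrite gR /eB enum_rankK_in.
Qed.

Lemma detA : \det (subm A A Sigma) = \det Taa.
Proof.
rewrite /subm (@det_reindex R _ (fun a b => Sigma a b) _ _ _ h2) //.
- by rewrite cards2 xy.
- exact: enum_val_inj.
- exact: h2_inj.
- move=> t; rewrite codom_enum_val; apply/idP/codomP => [|[a ->]]; last exact: h2_inA.
  by rewrite !inE => /orP [] /eqP ->; [exists 0; rewrite h20|exists 1; rewrite h21].
Qed.

Lemma Ssym a b : Sigma a b = Sigma b a.
Proof. by have := congr1 (fun M : 'M[R]_p => M b a) HsT; rewrite mxE. Qed.

Lemma TbbT : Tbb^T = Tbb.
Proof. by apply/matrixP => i j; rewrite /Tbb /subm !mxE Ssym. Qed.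

Lemma WT : W^T = W.
Proof. by rewrite /W trmx_inv TbbT. Qed.

Lemma TabT : Tab^T = Tba.
Proof. by apply/matrixP => i j; rewrite /Tab /Tba !mxE Ssym. Qed.

Lemma TbaT : Tba^T = Tab.
Proof. by rewrite -TabT trmxK. Qed.

Lemma TaaT : Taa^T = Taa.
Proof. by apply/matrixP => i j; rewrite /Taa !mxE Ssym. Qed.

Definition C := Tab *m W *m Tba.

Lemma CT : C^T = C.
Proof. by rewrite /C !trmx_mul TbaT WT TabT mulmxA. Qed.

Lemma ScT : Sc^T = Sc.
Proof. by rewrite /Sc linearB /= TaaT -/C CT. Qed.

Lemma Sc_pd w : w != 0 -> 0 < qf Sc w.
Proof.
move=> nw.
pose v := col_mx w (- (W *m Tba *m w)).
have nv : v != 0 by rewrite /v col_mx_eq0 negb_and nw.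
have := @pd_sub R p Sigma _ g g_inj (conj HsT HSpd) v nv.
rewrite EMg /qf /v tr_col_mx mul_row_block mul_row_col.
have -> : (- (W *m Tba *m w))^T = - (w^T *m Tab *m W).
  by rewrite linearN /= !trmx_mul TbaT WT mulmxA.
rewrite !mulNmx -!mulmxA mulVmx ?Tbb_unit // mulmx1 subrr mul0mx addr0.
by rewrite /Sc !(mulmxBl, mulmxBr) !mulmxA.
Qed.

Lemma C_psd w : 0 <= qf C w.
Proof.
pose z := Tba *m w.
have -> : qf C w = qf W z.
  by rewrite /qf /z /C trmx_mul TbaT !mulmxA.
case: (eqVneq (W *m z) 0) => [e|ne].
  by rewrite /qf -mulmxA e mulmx0 mxE.
have := Tbb_pd ne; rewrite /qf trmx_mul WT -!mulmxA.
rewrite [Tbb *m _]mulmxA -/W mulmxV ?Tbb_unit // mul1mx.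
exact: ltW.
Qed.

End Main.

Unset Implicit Arguments.
Theorem theorem2 (R : rcfType) (p : nat) (Sigma : 'M[R]_p) (E : rel 'I_p)
  (E_sym : symmetric E) (E_irr : irreflexive E)
  (HS : posdef Sigma) (HK : implies_graph (invmx Sigma) E)
  (x y : 'I_p) (Hxy : E x y) :
  path_weight [:: x; y] Sigma =
  pcov_entry (~: [set x; y]) Sigma x y /
    (1 - (vcorr [set x; y] (~: [set x; y]) Sigma) ^+ 2).
Proof.
have xy : x != y by apply: contraTneq Hxy => ->; rewrite E_irr.
have [HsT HSpd] := HS.
have HSpd' : forall v, v != 0 -> 0 < qf Sigma v by exact: HSpd.
set k := invmx Sigma x y.
set dT := \det (Taa Sigma x y).
set dS := \det (Sc Sigma x y).
set dB := \det (Tbb Sigma x y).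
have LHS : path_weight [:: x; y] Sigma = - dT * k.
  rewrite /path_weight.
  have -> : [set v in [:: x; y]] = [set x; y] by apply/setP => t; rewrite !inE.
  rewrite (detA Sigma xy) cards2 xy /= big_cons big_nil mulr1 /= -/dT -/k.
  by rewrite exprS sqrrN expr1n mulr1 mulN1r.
rewrite LHS pcovE (Sc01 xy HsT HSpd') -/dS -/k.
set S := Sc Sigma x y; set Cm := C Sigma x y.
have ScS : S 1 0 = S 0 1.
  by have := congr1 (fun M : 'M[R]_2 => M 0 1) (ScT x y HsT); rewrite mxE.
have CS : Cm 1 0 = Cm 0 1.
  by have := congr1 (fun M : 'M[R]_2 => M 0 1) (CT x y HsT); rewrite mxE.
have TSC : Taa Sigma x y = S + Cm by rewrite /S /Cm /Sc subrK.
have HS1 : forall a b : R, (a != 0) || (b != 0) -> 0 < a^+2 * S 0 0 + 2 * a * b * S 0 1 + b^+2 * S 1 1.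
  move=> a b nab; have := Sc_pd xy HsT HSpd' (col2_neq0 nab).
  by rewrite -/S qf2 ScS (_ : a * b * (S 0 1 + S 0 1) = 2 * a * b * S 0 1) //; ring.
have HC1 : forall a b : R, 0 <= a^+2 * Cm 0 0 + 2 * a * b * Cm 0 1 + b^+2 * Cm 1 1.
  move=> a b; have := C_psd x y HsT HSpd' (\col_(i < 2) (if i == 0 then a else b)).
  by rewrite -/Cm qf2 CS (_ : a * b * (Cm 0 1 + Cm 0 1) = 2 * a * b * Cm 0 1) //; ring.
have [dSp dle] := scal HS1 HC1.
have dSE : dS = S 0 0 * S 1 1 - S 0 1 ^+ 2 by rewrite /dS det22 -/S ScS expr2.
have dTE : dT = (S 0 0 + Cm 0 0) * (S 1 1 + Cm 1 1) - (S 0 1 + Cm 0 1) ^+ 2.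
  by rewrite /dT TSC det22 ![(S + Cm) _ _]mxE ScS CS expr2.
rewrite -dSE -dTE in dSp dle.
have dTp : 0 < dT by apply: lt_le_trans dle.
have dBn : dB != 0 by rewrite -unitfE -unitmxE (Tbb_unit x y HsT HSpd').
rewrite /vcorr.
have -> : ([set x; y] == set0) = false.
  by apply/negbTE/set0Pn; exists x; rewrite !inE eqxx.
case: ifP => /= HB.
  have C0 : Cm = 0.
    apply/matrixP => i j; rewrite !mxE big1 // => l _.
    by exfalso; have := ltn_ord l; move: (nat_of_ord l) => n; rewrite (eqP HB) cards0.
  have -> : dS = dT by rewrite /dS /dT -/S TSC C0 addr0.
  by rewrite expr0n /= subr0 divr1 mulrC mulNr mulrN.
rewrite sqr_sqrtr; last first.
  rewrite /valien (detAll xy HsT HSpd') (detA Sigma xy) subr_ge0.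
  rewrite -/dT -/dS (_ : \det (subm _ _ Sigma) = dB) //.
  rewrite (mulrC dT) -mulf_div divff // mul1r ler_pdivrMr // mul1r //.
rewrite /valien (detAll xy HsT HSpd') (detA Sigma xy) -/dT -/dS.
rewrite (_ : \det (subm _ _ Sigma) = dB) // opprB addrC subrK.
have dSn : dS != 0 by rewrite gt_eqF.
have dTn : dT != 0 by rewrite gt_eqF.
by field; rewrite dSn dTn dBn.
Qed.
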